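(* For every uniform preorder $(A,R)$, the indexed preorder $\mathsf{fam}(D(A,R))$ has existential quantification, and the singleton map $\eta:A\to PA$, $a\mapsto\{a\}$, is a monotone map from $(A,R)$ to $D(A,R)$. The induced indexed monotone map $\mathsf{fam}(\eta):\mathsf{fam}(A,R)\to\mathsf{fam}(D(A,R))$ is a primal $\exists$-completion.
   Context: A uniform preorder is a pair $(A,R)$ with $A$ a set and $R\subseteq P(A\times A)$ such that $\mathrm{id}_A\in R$, $s\circ r\in R$ whenever $r,s\in R$, and $s\in R$ whenever $r\in R$ and $s\subseteq r$. A monotone map $f:(A,R)\to(B,S)$ is a function $f:A\to B$ with $\{(fa,fa')\mid(a,a')\in r\}\in S$ for all $r\in R$. An indexed preorder is a pseudofunctor $\mathsf{Set}^{op}\to\mathsf{Ord}$; $\mathsf{fam}(A,R)$ is the indexed preorder $I\mapsto(A^I,\le)$ with $\varphi\le\psi$ iff $\{(\varphi i,\psi i)\mid i\in I\}\in R$, reindexing by precomposition; for monotone $f$, $\mathsf{fam}(f)$ is postcomposition with $f$. $D(A,R)=(PA,DR)$, where $PA$ is the powerset and $DR$ is the set of relations on $PA$ contained in some $[r]=\{(U,V)\in PA\times PA\mid\forall a\in U\,\exists b\in V.\,(a,b)\in r\}$ with $r\in R$. An indexed preorder $\mathcal{H}$ has existential quantification if each $u^*$ ($u:J\to I$) has a left adjoint $\exists_u$ satisfying Beck–Chevalley ($u^*\exists_v\cong\exists_{\bar v}\bar u^*$ for every pullback of $u$ and $v$ with projections $\bar u,\bar v$). An indexed monotone map $f:\mathcal{A}\to\mathcal{H}$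 into such $\mathcal{H}$ is an $\exists$-completion if for every $\mathcal{K}$ with existential quantification, precomposition with $f$ is an equivalence from the preorder of indexed monotone maps $\mathcal{H}\to\mathcal{K}$ commuting with $\exists$ (i.e. $g_I\exists_u\cong\exists_u g_J$) to the preorder of all indexed monotone maps $\mathcal{A}\to\mathcal{K}$. A predicate $\pi\in\mathcal{H}(I)$ is $\exists$-prime if for all $I\xleftarrow{u}J\xleftarrow{v}K$ and $\varphi\in\mathcal{H}(K)$ with $u^*\pi\le\exists_v\varphi$ there is a section $s$ of $v$ with $u^*\pi\le s^*\varphi$; $\mathsf{prim}(\mathcal{H})$ is the indexed sub-preorder of $\exists$-prime predicates; $\mathcal{H}$ has enough $\exists$-primes if every predicate is isomorphic to $\exists_u\pi$ for some $\exists$-prime $\pi$. A primal $\exists$-completion is an $\exists$-completion $e:\mathcal{A}\to\mathcal{H}$ such that $\mathcal{H}$ has enough $\exists$-prime predicates and $e$ is equivalent to the inclusion $\mathsf{prim}(\mathcal{H})\hookrightarrow\mathcal{H}$. *)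

(* Defs.v *)
From Stdlib Require Import Classical.

Set Implicit Arguments.
Unset Strict Implicit.

Definition rel (A : Type) := A -> A -> Prop.
(** [rcomp s r] is s ∘ r = {(a,c) | exists b, (a,b) ∈ r /\ (b,c) ∈ s}. *)
Definition rcomp {A : Type} (s r : rel A) : rel A :=
  fun a c => exists b, r a b /\ s b c.
Definition rsub {A : Type} (s r : rel A) : Prop := forall a b, s a b -> r a b.

Record UPreorder := {
  up_car :> Type;
  up_R : rel up_car -> Prop;
  up_id : up_R (@eq up_car);
  up_comp : forall r s, up_R r -> up_R s -> up_R (rcomp s r);
  up_down : forall r s, up_R r -> rsub s r -> up_R s
}.

Definition img {A B : Type} (f : A -> B) (r : rel A) : rel B :=
  fun b b' => exists a a', r a a' /\ f a = b /\ f a' = b'.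

Definition monotone (P Q : UPreorder) (f : P -> Q) : Prop :=
  forall r, @up_R P r -> @up_R Q (img f r).

Definition bracket {A : Type} (r : rel A) : rel (A -> Prop) :=
  fun U V => forall a, U a -> exists b, V b /\ r a b.

Definition DR (P : UPreorder) (t : rel (P -> Prop)) : Prop :=
  exists r : rel P, up_R r /\ rsub t (bracket r).

Lemma DR_id (P : UPreorder) : @DR P (@eq (P -> Prop)).
Proof.
  exists (@eq P); split; [apply up_id|].
  intros U V <- a Ha; exists a; auto.
Qed.

Lemma DR_comp (P : UPreorder) r s : @DR P r -> @DR P s -> @DR P (rcomp s r).
Proof.
  intros [r' [Hr Sr]] [s' [Hs Ss]]; exists (rcomp s' r'); split.
  - apply up_comp; assumption.
  - intros U W [V [HUV HVW]] a Ha.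
    destruct (Sr _ _ HUV a Ha) as [b [Hb Hab]].
    destruct (Ss _ _ HVW b Hb) as [c [Hc Hbc]].
    exists c; split; [assumption|exists b; auto].
Qed.

Lemma DR_down (P : UPreorder) r s : @DR P r -> rsub s r -> @DR P s.
Proof.
  intros [r' [Hr Sr]] Hsr; exists r'; split; [assumption|].
  intros U V H; apply Sr, Hsr, H.
Qed.

Definition D (P : UPreorder) : UPreorder :=
  {| up_car := P -> Prop; up_R := @DR P; up_id := DR_id P;
     up_comp := @DR_comp P; up_down := @DR_down P |}.

Definition eta (P : UPreorder) : P -> D P := fun a => fun x => x = a.

(** * Indexed preorders: pseudofunctors Set^op -> Ord (index sets are types) *)
Unset Implicit Arguments.
Record IdxPreorder := {
  ip_car :> Type -> Type;
  ip_le : forall I, ip_car I -> ip_car I -> Prop;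
  ip_refl : forall I x, ip_le I x x;
  ip_trans : forall I x y z, ip_le I x y -> ip_le I y z -> ip_le I x z;
  ip_re : forall I J (u : J -> I), ip_car I -> ip_car J;
  ip_re_mono : forall I J (u : J -> I) x y,
      ip_le I x y -> ip_le J (ip_re I J u x) (ip_re I J u y);
  ip_re_id : forall I x,
      ip_le I (ip_re I I (fun i : I => i) x) x /\ ip_le I x (ip_re I I (fun i : I => i) x);
  ip_re_comp : forall I J K (u : J -> I) (v : K -> J) x,
      ip_le K (ip_re I K (fun k => u (v k)) x) (ip_re J K v (ip_re I J u x)) /\
      ip_le K (ip_re J K v (ip_re I J u x)) (ip_re I K (fun k => u (v k)) x)
}.

Set Implicit Arguments.
Arguments ip_le {_ _} _ _.
Arguments ip_re {_ _ _} _ _.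

Definition iso {H : IdxPreorder} {I : Type} (x y : H I) : Prop :=
  ip_le x y /\ ip_le y x.

Definition fam_le (P : UPreorder) (I : Type) (phi psi : I -> P) : Prop :=
  @up_R P (fun a b => exists i, phi i = a /\ psi i = b).

Lemma fam_refl (P : UPreorder) I (x : I -> P) : fam_le x x.
Proof.
  apply (up_down (up_id P)). intros a b [i [<- <-]]; reflexivity.
Qed.

Lemma fam_trans (P : UPreorder) I (x y z : I -> P) :
  fam_le x y -> fam_le y z -> fam_le x z.
Proof.
  intros Hxy Hyz. apply (up_down (up_comp Hxy Hyz)).
  intros a c [i [<- <-]]. exists (y i); split; exists i; auto.
Qed.

Lemma fam_re_mono (P : UPreorder) I J (u : J -> I) (x y : I -> P) :
  fam_le x y -> fam_le (fun j => x (u j)) (fun j => y (u j)).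
Proof.
  intros H; apply (up_down H). intros a b [j [<- <-]]; exists (u j); auto.
Qed.

Definition fam (P : UPreorder) : IdxPreorder.
Proof.
  refine {| ip_car := fun I => I -> P;
            ip_le := @fam_le P;
            ip_refl := @fam_refl P;
            ip_trans := @fam_trans P;
            ip_re := fun I J u x => fun j => x (u j);
            ip_re_mono := @fam_re_mono P |}.
  - intros I x; split; apply fam_refl.
  - intros I J K u v x; split; apply fam_refl.
Defined.

Definition fam_map (P Q : UPreorder) (f : P -> Q) :
  forall I, fam P I -> fam Q I := fun I phi => fun i => f (phi i).

Definition idx_map (H K : IdxPreorder) := forall I, H I -> K I.

Definition is_idx_mono (H K : IdxPreorder) (f : idx_map H K) : Prop :=
  (forall I (x y : H I), ip_le x y -> ip_le (f I x) (f I y)) /\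
  (forall I J (u : J -> I) (x : H I), iso (f J (ip_re u x)) (ip_re u (f I x))).

Definition map_le (H K : IdxPreorder) (f g : idx_map H K) : Prop :=
  forall I (x : H I), ip_le (f I x) (g I x).

Definition map_iso (H K : IdxPreorder) (f g : idx_map H K) : Prop :=
  map_le f g /\ map_le g f.

Definition map_comp (A H K : IdxPreorder) (g : idx_map H K) (f : idx_map A H)
  : idx_map A K := fun I x => g I (f I x).

Definition is_pullback (I J K P : Type) (u : J -> I) (v : K -> I)
  (pv : P -> J) (pu : P -> K) : Prop :=
  (forall p, u (pv p) = v (pu p)) /\
  (forall j k, u j = v k -> exists! p, pv p = j /\ pu p = k).

Unset Implicit Arguments.
Record ExQuant (H : IdxPreorder) := {
  ex : forall I J (u : J -> I), H J -> H I;
  ex_adj : forall I J (u : J -> I) (x : H J) (y : H I),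
      @ip_le H I (ex I J u x) y <-> @ip_le H J x (@ip_re H I J u y);
  (** Beck–Chevalley: u^* ∃_v ≅ ∃_{v̄} ū^*, where v̄ = pv, ū = pu *)
  ex_bc : forall I J K P (u : J -> I) (v : K -> I) (pv : P -> J) (pu : P -> K),
      is_pullback u v pv pu ->
      forall x : H K, @iso H J (@ip_re H I J u (ex I K v x)) (ex J P pv (@ip_re H K P pu x))
}.

Set Implicit Arguments.
Arguments ex {_} _ {_ _} _ _.

Definition has_ex_quant (H : IdxPreorder) : Prop := inhabited (ExQuant H).

Definition commutes_ex (H K : IdxPreorder) (EH : ExQuant H) (EK : ExQuant K)
  (g : idx_map H K) : Prop :=
  forall I J (u : J -> I) (x : H J), iso (g I (ex EH u x)) (ex EK u (g J x)).

(** f : A -> H is an ∃-completion: precomposition with f is an equivalence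
    (monotone, order-reflecting, essentially surjective) from ∃-preserving
    indexed monotone maps H -> K to all indexed monotone maps A -> K. *)
Definition is_ex_completion (A H : IdxPreorder) (EH : ExQuant H)
  (f : idx_map A H) : Prop :=
  is_idx_mono f /\
  forall (K : IdxPreorder) (EK : ExQuant K),
    (forall g g' : idx_map H K,
        is_idx_mono g -> commutes_ex EH EK g ->
        is_idx_mono g' -> commutes_ex EH EK g' ->
        (map_le (map_comp g f) (map_comp g' f) <-> map_le g g')) /\
    (forall h : idx_map A K, is_idx_mono h ->
        exists g : idx_map H K,
          is_idx_mono g /\ commutes_ex EH EK g /\ map_iso (map_comp g f) h).

Definition is_ex_prime (H : IdxPreorder) (EH : ExQuant H) (I : Type) (pi : H I)
  : Prop :=
  forall J K (u : J -> I) (v : K -> J) (phi : H K),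
    ip_le (ip_re u pi) (ex EH v phi) ->
    exists s : J -> K, (forall j, v (s j) = j) /\ ip_le (ip_re u pi) (ip_re s phi).

Definition enough_ex_primes (H : IdxPreorder) (EH : ExQuant H) : Prop :=
  forall I (phi : H I), exists (J : Type) (u : J -> I) (pi : H J),
    is_ex_prime EH pi /\ iso phi (ex EH u pi).

(** f : A -> H is equivalent (over H) to the inclusion prim(H) ↪ H:
    there is an indexed map k : A -> prim(H) with incl ∘ k ≅ f which is an
    equivalence, i.e. pointwise order-reflecting and essentially surjective. *)
Definition equiv_to_prim_incl (A H : IdxPreorder) (EH : ExQuant H)
  (f : idx_map A H) : Prop :=
  exists k : forall I, A I -> { pi : H I | is_ex_prime EH pi },
    (forall I (x : A I), iso (f I x) (proj1_sig (k I x))) /\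
    (forall I (x y : A I),
        ip_le (proj1_sig (k I x)) (proj1_sig (k I y)) -> ip_le x y) /\
    (forall I (pi : H I), is_ex_prime EH pi ->
        exists x : A I, iso (proj1_sig (k I x)) pi).

Definition is_primal_ex_completion (A H : IdxPreorder) (EH : ExQuant H)
  (f : idx_map A H) : Prop :=
  is_ex_completion EH f /\ enough_ex_primes EH /\ equiv_to_prim_incl EH f.

(* Main.v *)
Require Import Defs.
From Stdlib Require Import Classical ClassicalEpsilon FunctionalExtensionality ProofIrrelevance.

Section Gen.
Variable K : IdxPreorder.
Variable EK : ExQuant K.

Lemma iso_refl I (x : K I) : iso x x.
Proof. split; apply ip_refl. Qed.

Lemma ex_unit {I J} (u : J -> I) (x : K J) : ip_le x (ip_re u (ex EK u x)).
Proof. apply (ex_adj _ EK). apply ip_refl. Qed.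

Lemma ex_mono I J (u : J -> I) (x y : K J) : ip_le x y -> ip_le (ex EK u x) (ex EK u y).
Proof. intros H. apply (ex_adj _ EK). eapply ip_trans; [exact H| apply ex_unit]. Qed.

Lemma ex_L I X Y (uX : X -> I) (uY : Y -> I) (t : X -> Y) (x : K X) (y : K Y) :
  (forall z, uY (t z) = uX z) -> ip_le x (ip_re t y) -> ip_le (ex EK uX x) (ex EK uY y).
Proof.
  intros Hu Hx. apply (ex_adj _ EK).
  assert (E : (fun z => uY (t z)) = uX) by (apply functional_extensionality; auto).
  eapply ip_trans; [exact Hx|].
  eapply ip_trans; [apply ip_re_mono; apply (ex_unit uY y)|].
  rewrite <- E. apply (proj2 (ip_re_comp _ _ _ _ _ _ _)).
Qed.

Lemma ex_comp I J L (w : J -> I) (u : L -> J) (x : K L) :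
  iso (ex EK (fun z => w (u z)) x) (ex EK w (ex EK u x)).
Proof.
  split.
  - apply (ex_adj _ EK).
    eapply ip_trans; [apply (ex_unit (u) _)|].
    eapply ip_trans; [apply ip_re_mono; apply (ex_unit w (ex EK u x))|].
    apply (proj2 (ip_re_comp _ _ _ _ _ _ _)).
  - apply (ex_adj _ EK). apply (ex_adj _ EK).
    eapply ip_trans; [apply (ex_unit (fun z => w (u z)) _)|].
    apply (proj1 (ip_re_comp _ _ _ _ _ _ _)).
Qed.

Lemma ex_id_iso I (x : K I) : iso (ex EK (fun i => i) x) x.
Proof.
  split.
  - apply (ex_adj _ EK). apply (proj2 (ip_re_id _ _ _)).
  - eapply ip_trans; [apply (ex_unit (fun i => i) _)|]. apply (proj1 (ip_re_id _ _ _)).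
Qed.

Lemma ex_uniq (E2 : ExQuant K) I J (u : J -> I) (x : K J) : iso (ex EK u x) (ex E2 u x).
Proof.
  split.
  - apply (ex_adj _ EK). apply (ex_adj _ E2). apply ip_refl.
  - apply (ex_adj _ E2). apply (ex_adj _ EK). apply ip_refl.
Qed.
End Gen.
Arguments ex_unit {K} EK {I J} u x.
Arguments ex_mono {K EK I J u x y} _.
Arguments ex_L {K} EK {I X Y uX uY} t {x y} _ _.
Arguments ex_comp {K} EK {I J L} w u x.
Arguments ex_id_iso {K} EK {I} x.
Arguments ex_uniq {K} EK E2 {I J} u x.

Lemma le_DP (P : UPreorder) I (phi psi : I -> P -> Prop) :
  @ip_le (fam (D P)) I phi psi <->
  exists r, up_R r /\ forall i a, phi i a -> exists b, psi i b /\ r a b.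
Proof.
  cbn. unfold fam_le, DR. cbn. split.
  - intros [r [Hr Hs]]. exists r; split; auto. intros i a Ha.
    exact (Hs _ _ (ex_intro _ i (conj eq_refl eq_refl)) a Ha).
  - intros [r [Hr Hs]]. exists r; split; auto. intros U V [i [<- <-]]. exact (Hs i).
Qed.

Lemma le_of_sub (P : UPreorder) I (phi psi : I -> P -> Prop) :
  (forall i a, phi i a -> psi i a) -> @ip_le (fam (D P)) I phi psi.
Proof.
  intros H. apply le_DP. exists (@eq P); split; [apply up_id|].
  intros i a Ha; exists a; auto.
Qed.

Lemma fam_le_eq (P : UPreorder) I (f g : I -> P) :
  (forall i, f i = g i) -> @ip_le (fam P) I f g.
Proof.
  intros H. cbn. unfold fam_le. apply (up_down (up_id P)).
  intros a b [i [<- <-]]; auto.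
Qed.

Definition Ufam (P : UPreorder) I J (u : J -> I) (phi : J -> P -> Prop) : I -> P -> Prop :=
  fun i a => exists j, u j = i /\ phi j a.

Definition exq (P : UPreorder) : ExQuant (fam (D P)).
Proof.
  refine (@Build_ExQuant (fam (D P)) (fun I J u x => @Ufam P I J u x) _ _).
  - intros I J u x y. rewrite !le_DP. split.
    + intros [r [Hr H]]. exists r; split; auto. intros j a Ha.
      apply H. exists j; auto.
    + intros [r [Hr H]]. exists r; split; auto. intros i a [j [<- Ha]].
      apply (H j a Ha).
  - intros I J K0 Q u v pv pu [Hc Hu] x. split; apply le_of_sub.
    + intros j a [k [Hk Ha]].
      destruct (Hu j k (eq_sym Hk)) as [p [[Hp1 Hp2] _]].
      exists p. split; auto. cbn. rewrite Hp2; auto.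
    + intros j a [p [Hp Ha]]. cbn. exists (pu p). split; auto.
      rewrite <- Hp. symmetry. apply Hc.
Defined.
Set Implicit Arguments.
Unset Strict Implicit.
Arguments Ufam {P I J} u phi.

Definition Jt (P : UPreorder) I (phi : I -> P -> Prop) := {i : I & {a : P | phi i a}}.
Definition ju (P : UPreorder) I (phi : I -> P -> Prop) : Jt phi -> I := fun z => projT1 z.
Definition jp (P : UPreorder) I (phi : I -> P -> Prop) : Jt phi -> P :=
  fun z => proj1_sig (projT2 z).

Lemma decomp_U (P : UPreorder) I (phi : I -> P -> Prop) :
  @iso (fam (D P)) I phi (Ufam (@ju P I phi) (fun z => eta (jp z))).
Proof.
  split; apply le_of_sub.
  - intros i a Ha. exists (existT _ i (exist _ a Ha)). cbn. unfold eta; cbn. auto.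
  - intros i a [z [<- Ha]]. unfold eta in Ha. subst a. exact (proj2_sig (projT2 z)).
Qed.

Lemma decomp (P : UPreorder) (EH : ExQuant (fam (D P))) I (phi : I -> P -> Prop) :
  @iso (fam (D P)) I phi (ex EH (@ju P I phi) (fun z => eta (jp z))).
Proof.
  destruct (decomp_U phi) as [H1 H2].
  destruct (ex_uniq (exq P) EH (@ju P I phi) (fun z => eta (jp z))) as [H3 H4].
  split; eapply ip_trans; eauto.
Qed.

Lemma Ufam_iso (P : UPreorder) (EH : ExQuant (fam (D P))) I J (u : J -> I) (phi : J -> P -> Prop) :
  @iso (fam (D P)) I (ex EH u phi) (Ufam u phi).
Proof. exact (ex_uniq EH (exq P) u phi). Qed.

Section Comp.
Variable P : UPreorder.
Variable K : IdxPreorder.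
Variable EK : ExQuant K.
Variable h : idx_map (fam P) K.
Hypothesis hm : is_idx_mono h.

Definition gdef : idx_map (fam (D P)) K :=
  fun I (phi : I -> P -> Prop) => ex EK (@ju P I phi) (h (@jp P I phi)).

Lemma exh_L I X Y (uX : X -> I) (uY : Y -> I) (t : X -> Y) (pX : X -> P) (pY : Y -> P) :
  (forall z, uY (t z) = uX z) -> @ip_le (fam P) X pX (fun z => pY (t z)) ->
  ip_le (ex EK uX (h pX)) (ex EK uY (h pY)).
Proof.
  intros Hu Hp. apply (ex_L EK t); auto.
  eapply ip_trans; [apply (proj1 hm); exact Hp|].
  apply (proj1 ((proj2 hm) _ _ t pY)).
Qed.

Lemma g_mono I (phi psi : I -> P -> Prop) :
  @ip_le (fam (D P)) I phi psi -> ip_le (gdef phi) (gdef psi).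
Proof.
  intros H. apply le_DP in H. destruct H as [r [Hr H]].
  assert (X : forall z : Jt phi, {z' : Jt psi | ju z' = ju z /\ r (jp z) (jp z')}).
  { intros [i [a Ha]].
    destruct (constructive_indefinite_description _ (H i a Ha)) as [b [Hb Hab]].
    exists (existT _ i (exist _ b Hb)). cbn. auto. }
  apply exh_L with (t := fun z => proj1_sig (X z)).
  - intros z. exact (proj1 (proj2_sig (X z))).
  - cbn. unfold fam_le. apply (up_down Hr). intros a b [z [<- <-]].
    exact (proj2 (proj2_sig (X z))).
Qed.

Lemma g_re I J (v : J -> I) (phi : I -> P -> Prop) :
  iso (gdef (fun j => phi (v j))) (ip_re v (gdef phi)).
Proof.
  set (pu := fun z : Jt (fun j => phi (v j)) =>
               existT (fun i => {a : P | phi i a}) (v (projT1 z)) (projT2 z) : Jt phi).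
  assert (PB : is_pullback v (@ju P I phi) (@ju P J (fun j => phi (v j))) pu).
  { split.
    - intros p. reflexivity.
    - intros j [i [a Ha]] E. cbn in E. subst i.
      exists (existT _ j (exist _ a Ha)). split.
      + cbn. auto.
      + intros [j' [a' Ha']] [E1 E2]. cbn in E1. subst j'.
        unfold pu in E2. cbn in E2.
        assert (Ea : a' = a) by exact (f_equal (fun z : Jt phi => jp z) E2).
        subst a'. assert (Ha = Ha') by apply proof_irrelevance. subst. reflexivity. }
  destruct (ex_bc _ EK _ _ _ _ v (@ju P I phi) _ pu PB (h (@jp P I phi))) as [B1 B2].
  destruct ((proj2 hm) _ _ pu (@jp P I phi)) as [R1 R2].
  unfold gdef. split.
  - eapply ip_trans; [|exact B2]. apply ex_mono. exact R1.
  - eapply ip_trans; [exact B1|]. apply ex_mono. exact R2.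
Qed.

Lemma g_idx : is_idx_mono gdef.
Proof. split; [intros I x y; apply g_mono | intros I J u x; exact (g_re u x)]. Qed.

Lemma g_ex (EH : ExQuant (fam (D P))) : commutes_ex EH EK gdef.
Proof.
  intros I J w phi.
  destruct (Ufam_iso EH w phi) as [U1 U2].
  assert (A : iso (gdef (Ufam w phi)) (ex EK w (gdef phi))).
  { destruct (ex_comp EK w (@ju P J phi) (h (@jp P J phi))) as [C1 C2].
    unfold gdef at 2. split.
    - eapply ip_trans; [|exact C1].
      assert (X : forall z : Jt (Ufam w phi), {z' : Jt phi | w (ju z') = ju z /\ jp z' = jp z}).
      { intros [i [a Ha]].
        destruct (constructive_indefinite_description _ Ha) as [j [Hj Ha']].
        exists (existT _ j (exist _ a Ha')). cbn. auto. }
      apply exh_L with (t := fun z => proj1_sig (X z)).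
      + intros z. exact (proj1 (proj2_sig (X z))).
      + apply fam_le_eq. intros z. symmetry. exact (proj2 (proj2_sig (X z))).
    - eapply ip_trans; [exact C2|].
      unfold gdef.
      apply exh_L with (t := fun z : Jt phi => existT (fun i => {a : P | Ufam w phi i a})
                         (w (ju z)) (exist _ (jp z) (ex_intro _ (ju z) (conj eq_refl (proj2_sig (projT2 z)))))).
      + intros z. reflexivity.
      + apply fam_le_eq. intros z. reflexivity. }
  destruct A as [A1 A2]. split.
  - eapply ip_trans; [|exact A1]. apply g_mono. exact U1.
  - eapply ip_trans; [exact A2|]. apply g_mono. exact U2.
Qed.

Lemma g_eta : map_iso (map_comp gdef (@fam_map P (D P) (@eta P))) h.
Proof.
  split; intros I x; unfold map_comp, fam_map, gdef.
  - eapply ip_trans; [|apply (ex_id_iso EK)].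
    apply exh_L with (t := @ju P I (fun i => eta (x i))).
    + reflexivity.
    + apply fam_le_eq. intros [i [a Ha]]. exact Ha.
  - eapply ip_trans; [apply (ex_id_iso EK)|].
    apply exh_L with (t := fun i => existT (fun i => {a : P | eta (x i) a}) i (exist _ (x i) eq_refl)).
    + reflexivity.
    + apply fam_le_eq. reflexivity.
Qed.
End Comp.
Set Implicit Arguments.
Unset Strict Implicit.

Lemma eta_prime (P : UPreorder) (EH : ExQuant (fam (D P))) I (x : I -> P) :
  is_ex_prime EH (fun i => eta (x i) : D P).
Proof.
  intros J K u v phi H.
  destruct (Ufam_iso EH v phi) as [U1 _].
  assert (H' := ip_trans _ _ _ _ _ H U1). apply le_DP in H'. destruct H' as [r [Hr H']].
  assert (X : forall j, exists k, v k = j /\ exists b, phi k b /\ r (x (u j)) b).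
  { intros j. destruct (H' j (x (u j)) eq_refl) as [b [[k [Hk Hb]] Hrb]].
    exists k; split; eauto. }
  exists (fun j => proj1_sig (constructive_indefinite_description _ (X j))). split.
  - intros j. exact (proj1 (proj2_sig (constructive_indefinite_description _ (X j)))).
  - apply le_DP. exists r; split; auto. intros j a Ha. cbn in Ha. unfold eta in Ha. subst a.
    exact (proj2 (proj2_sig (constructive_indefinite_description _ (X j)))).
Qed.

Lemma eta_idx (P : UPreorder) : is_idx_mono (@fam_map P (D P) (@eta P)).
Proof.
  split.
  - intros I x y H. apply le_DP. exists (fun a b => exists i, x i = a /\ y i = b).
    split; [exact H|]. intros i a Ha. unfold fam_map, eta in Ha. subst a.
    exists (y i). split; [reflexivity|]. eauto.
  - intros I J u x. split; apply ip_refl.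
Qed.

Theorem proposition4p7 (P : UPreorder) :
  has_ex_quant (fam (D P)) /\
  @monotone P (D P) (@eta P) /\
  (forall EH : ExQuant (fam (D P)),
      @is_primal_ex_completion (fam P) (fam (D P)) EH (@fam_map P (D P) (@eta P))).
Proof.
  split; [exact (inhabits (exq P))|]. split.
  { intros r Hr. exists r. split; auto. intros U V [a [a' [Har [<- <-]]]] b Hb.
    unfold eta in Hb. subst b. exists a'. unfold eta. auto. }
  intros EH. split; [split; [apply eta_idx|]|split].
  - intros K EK. split.
    + intros g g' [gm gr] gx [gm' gr'] gx'. split.
      * intros Hle I phi.
        destruct (decomp EH phi) as [D1 D2].
        set (u := @ju P I phi). set (pi := fun z => eta (@jp P I phi z) : D P).
        destruct (gx I _ u pi) as [G1 G2].
        destruct (gx' I _ u pi) as [G1' G2'].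
        eapply ip_trans; [apply gm; exact D1|].
        eapply ip_trans; [exact G1|].
        eapply ip_trans; [|apply gm'; exact D2].
        eapply ip_trans; [|exact G2'].
        apply ex_mono. apply (Hle _ (fun z => @jp P I phi z)).
      * intros Hle I x. apply Hle.
    + intros h hm. exists (gdef EK h). split; [apply g_idx; exact hm|].
      split; [apply g_ex; exact hm|]. apply g_eta; exact hm.
  - intros I phi. exists (Jt phi), (@ju P I phi), (fun z => eta (@jp P I phi z) : D P).
    split; [apply eta_prime|]. apply decomp.
  - exists (fun I x => exist _ (fun i => eta (x i) : D P) (@eta_prime P EH I x)). split; [|split].
    + intros I x. split; apply ip_refl.
    + intros I x y H. cbn in H. apply le_DP in H. destruct H as [r [Hr H]].
      cbn. unfold fam_le. apply (up_down Hr). intros a b [i [<- <-]].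
      destruct (H i (x i) eq_refl) as [b [Hb Hab]]. unfold eta in Hb. subst b. exact Hab.
    + intros I pi Hpi.
      destruct (decomp EH pi) as [D1 _].
      destruct (Hpi I _ (fun i => i) (@ju P I pi) (fun z => eta (@jp P I pi z)) D1) as [s [Hs Hle]].
      exists (fun i => @jp P I pi (s i)). cbn. split.
      * apply le_of_sub. intros i a Ha. unfold eta in Ha. subst a.
        pose proof (proj2_sig (projT2 (s i))) as Hm.
        change (pi (@ju P I pi (s i)) (@jp P I pi (s i))) in Hm. rewrite Hs in Hm. exact Hm.
      * exact Hle.
Qed.
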